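(* Let $G$ be a finite primitive permutation group on $\Omega$ of diagonal type, and let $p$ be a prime dividing $|\Omega|$. Then $G$ has a subdegree divisible by $p$.
   Context: $G$ is of diagonal type if its socle is $N=T^k$ for a nonabelian simple group $T$ and $k\ge 2$, and the stabiliser $N_\alpha$ of a point $\alpha\in\Omega$ is a full diagonal subgroup of $N$, i.e. of the form $\{(t^{\varphi_1},\dots,t^{\varphi_k}) : t\in T\}$ for some automorphisms $\varphi_i$ of $T$; then $|\Omega|=|T|^{k-1}$. A subdegree is the size of an orbit of a point stabiliser. *)

(* Defs.v *)
From mathcomp Require Import all_boot all_order all_fingroup all_solvable.
Set Implicit Arguments. Unset Strict Implicit. Unset Printing Implicit Defensive.
Local Open Scope group_scope.

Definition socle (gT : finGroupType) (G : {set gT}) : {set gT} :=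
  <<\bigcup_(M : {group gT} | (M \subset G) && minnormal M G) M>>.

Definition diagonal_type (Omega : finType) (G : {group {perm Omega}}) : Prop :=
  exists (k : nat) (hT : finGroupType) (T : {group hT})
         (Ts : 'I_k -> {group {perm Omega}})
         (phi : forall i : 'I_k, {morphism T >-> {perm Omega}}),
    [/\ (1 < k)%N, simple T, ~~ abelian T,
        \big[dprod/1]_(i < k) Ts i = socle G
      & forall i, isom T (Ts i) (phi i)] /\
    exists a : Omega,
      'C_(socle G)[a | 'P] = [set \prod_(i < k) phi i t | t in T].

(* Main.v *)
Require Import Defs.
From mathcomp Require Import all_boot all_order all_fingroup all_solvable.
Local Open Scope group_scope.

Module Helpers.
Set Implicit Arguments. Unset Strict Implicit. Unset Printing Implicit Defensive.

Lemma jordan_cover (gT : finGroupType) (G H : {group gT}) :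
  H \proper G -> exists2 x, x \in G & forall g, g \in G -> x \notin H :^ g.
Proof.
move=> pHG; have sHG := proper_sub pHG.
suff lt: #|class_support H G| < #|G|.
  have: ~~ (G \subset class_support H G).
    by apply: contraTN lt => s; rewrite -leqNgt subset_leq_card.
  case/subsetPn => x Gx nx; exists x => // g Gg; apply: contra nx.
  rewrite mem_conjg => hx; rewrite -(conjgKV g x); exact: memJ_class_support.
have one: (1 : gT) \in class_support H G.
  by rewrite -(conj1g 1); apply: memJ_class_support.
rewrite (cardsD1 1) one class_supportD1.
have le1 := leq_card_cover (H^# :^: G).
have e2 : \sum_(A in H^# :^: G) #|A| = (#|H^# :^: G| * #|H^#|)%N.
  rewrite -sum_nat_const; apply: eq_bigr => A /imsetP[g _ ->]; exact: cardJg.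
have le2 : #|H^# :^: G| <= #|G : H|.
  rewrite card_conjugates; apply: dvdn_leq; first exact: indexg_gt0.
  apply: indexgS; rewrite subsetI sHG /=; apply/normsP => x Hx; by rewrite conjD1g (normsP (normG H)).
have eH : #|H^#| = (#|H| - 1)%N by rewrite (cardsD1 1 H) group1 /= addKn.
have gt1 : 1 < #|G : H| by rewrite indexg_gt1; case/properP: pHG => _ [x Gx nHx]; apply/subsetPn; exists x.
have LG := Lagrange sHG.
have hpos := cardG_gt0 H.
rewrite e2 eH in le1.
have L1 : #|cover (H^# :^: G)| <= (#|H^# :^: G| * (#|H| - 1))%N by case: le1.
have L2 := leq_mul le2 (leqnn (#|H| - 1)).
have L3 : (#|H| * #|G : H| = #|G : H| * (#|H| - 1) + #|G : H|)%N.
  by rewrite mulnC -{3}(muln1 #|G:H|) -mulnDr subnK.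
rewrite -LG L3 /= add1n -addn2; exact: leq_add (leq_trans L1 L2) gt1.
Qed.


Lemma class_div (gT : finGroupType) (T : {group gT}) (p : nat) :
  simple T -> ~~ abelian T -> prime p -> (p %| #|T|)%N ->
  exists2 x, x \in T & (p %| #|T : 'C_T[x]|)%N.
Proof.
move=> simT nabT pr_p pT.
have [P sylP] := Sylow_exists p T.
have sPT := pHall_sub sylP.
have pHT : 'C_T(P) \proper T.
  rewrite properE subsetIl /=; apply/negP => sTC.
  have sPZ : P \subset 'Z(T).
    rewrite /center subsetI sPT /= centsC.
    by apply: (subset_trans sTC); exact: subsetIr.
  have := sub_center_normal sPZ; case/simpleP: simT => _ /[apply] -[P1|PT].
  - have := card_Hall sylP; rewrite P1 cards1 => /esym/eqP.
    move=> /eqP h; have := p_part_gt1 p #|T|; by rewrite h mem_primes pr_p cardG_gt0 pT.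
  - apply: (negP nabT); rewrite /abelian -{1}PT.
    apply: (subset_trans sPZ); exact: subsetIr.
have [x Tx nx] := jordan_cover pHT.
exists x => //; apply/negPn/negP => npx.
have sCT : 'C_T[x] \subset T := subsetIl _ _.
have [Q sylQ] := Sylow_exists p 'C_T[x].
have sQC := pHall_sub sylQ.
have sylQT : p.-Sylow(T) Q.
  rewrite pHallE (subset_trans sQC sCT) /= (card_Hall sylQ).
  rewrite -(Lagrange sCT) partnM ?cardG_gt0 ?indexg_gt0 //.
  by rewrite (part_p'nat (n := #|T : 'C_T[x]|)) ?muln1 // p'natE.
have [g Tg defQ] := Sylow_trans sylP sylQT.
have := nx g Tg; rewrite conjIg (conjGid Tg) -centJ -defQ inE Tx /=.
by rewrite -sub_cent1 (subset_trans sQC) ?subsetIr.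
Qed.

Lemma orbit_div (aT : finGroupType) (sT : finType) (to : {action aT &-> sT})
  (K H : {group aT}) (b : sT) :
  H \subset K -> K \subset 'N(H) ->
  (#|H : 'C_H[b | to]| %| #|K : 'C_K[b | to]|)%N.
Proof.
move=> sHK nHK.
have sLK : 'C_K[b | to] \subset K := subsetIl _ _.
have nHL : 'C_K[b | to] \subset 'N(H) := subset_trans sLK nHK.
have e1 : 'C_H[b | to] = H :&: 'C_K[b | to].
  by rewrite setIA (setIidPl sHK).
rewrite e1 indexgI -indexMg -norm_joinEl //.
apply: indexSg; first exact: joing_subl.
by rewrite join_subG sLK.
Qed.

Lemma conjg_bigprod (gT : finGroupType) (k : nat) (c : 'I_k -> gT) (y : gT) :
  (\prod_(i < k) c i) ^ y = \prod_(i < k) c i ^ y.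
Proof. exact: (big_morph (conjg^~ y) (fun a b => conjMg a b y) (conj1g y)). Qed.

Lemma conj_comm (gT : finGroupType) (u v : gT) : commute u v -> u ^ v = u.
Proof. by move=> cuv; rewrite conjgE -?mulgA cuv mulKg. Qed.
End Helpers.
Import Helpers.

Theorem lemma3p3 (Omega : finType) (G : {group {perm Omega}}) (p : nat) :
  [primitive G, on [set: Omega] | 'P] ->
  diagonal_type G ->
  prime p -> (p %| #|Omega|)%N ->
  exists a b : Omega, (p %| #|orbit 'P 'C_G[a | 'P] b|)%N.
Proof.
move=> primG [k [hT [T [Ts [phi [[k1 simT nabT defN0 isoT] [a defD0]]]]]]] pr_p pO.
have sgrp : group_set (socle G) by rewrite /socle; exact: groupP.
pose N := Group sgrp.
have defN : \big[dprod/1]_(i < k) Ts i = N := defN0.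
have defD : 'C_N[a | 'P] = [set \prod_(i < k) phi i t | t in T] := defD0.
clear defN0 defD0.
have nNG : N <| G.
  rewrite /normal /= /socle gen_subG norms_gen ?andbT.
    by apply/bigcupsP => M /andP[sMG _].
  apply/norms_bigcup/bigcapsP => M /andP[_ /mingroupp /andP[_ nMG]]; exact: nMG.
have sNG := normal_sub nNG.
have k0 : 0 < k by apply: ltnW.
pose i0 := Ordinal k0; pose i1 := Ordinal k1.
have ne10 : i1 != i0 by [].
have phiT : forall i t, t \in T -> phi i t \in Ts i.
  by move=> i t Tt; rewrite -(isom_im (isoT i)) mem_morphim.
have phi_inj : forall i, {in T &, injective (phi i)}.
  by move=> i; apply/injmP; exact: isom_inj (isoT i).
have sTN : forall i, Ts i \subset N.
  move=> i; rewrite -(bigdprodWY defN); apply: sub_gen.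
  exact: (bigcup_sup i).
have cTs : forall i j, i != j -> Ts i \subset 'C(Ts j).
  have /bigcprodYP cH : \big[cprod/1]_(i | predT i) Ts i == (\prod_(i | predT i) Ts i)%G.
    by rewrite (bigdprodWcp defN) bigprodGE (bigdprodWY defN).
  by move=> i j nij; apply: cH.
have comp : forall e f : 'I_k -> {perm Omega}, (forall i, e i \in Ts i) ->
    (forall i, f i \in Ts i) -> \prod_(i < k) e i = \prod_(i < k) f i ->
    forall i, e i = f i.
  move=> e f eT fT ef i.
  have Nx : \prod_(i < k) e i \in N.
    by apply: group_prod => j _; apply: (subsetP (sTN j)).
  have [c [_ _ U]] := mem_bigdprod defN Nx.
  by rewrite (U e (fun j _ => eT j) (erefl _) i isT) (U f (fun j _ => fT j) ef i isT).
pose del t := \prod_(i < k) phi i t.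
have del_inj : {in T &, injective del}.
  move=> t s Tt Ts' e; apply: (phi_inj i1) => //.
  exact: comp (fun i => phiT i t Tt) (fun i => phiT i s Ts') e i1.
have cardN : #|N| = (#|T| ^ k)%N.
  rewrite -(bigdprod_card defN) (eq_bigr (fun _ => #|T|)); last first.
    by move=> i _; rewrite (isom_card (isoT i)).
  by rewrite big_const_ord iter_muln_1.
have Tgt1 : 1 < #|T| by rewrite cardG_gt1; case/simpleP: simT.
have pT : (p %| #|T|)%N.
  have [cN | trN] := prim_trans_norm primG nNG.
    exfalso; have N1 : N \subset [1] := subset_trans cN (perm_faithful G).
    move: (cardN); rewrite (trivgP N1) cards1 -(prednK k0) expnS => /esym/eqP.
    by rewrite muln_eq1 => /andP[/eqP e _]; rewrite e in Tgt1.
  have eO : #|Omega| = #|N : 'C_N[a | 'P]|.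
    by rewrite -card_orbit (atransP trN) ?inE // cardsT.
  have pN : (p %| #|N|)%N.
    by apply: dvdn_trans (dvdn_indexg N 'C_N[a | 'P]); rewrite -eO.
  move: pN; rewrite cardN Euclid_dvdX //.
  by case/andP.
have [x Tx px] := class_div simT nabT pr_p pT.
pose n := phi i0 x.
have Tn : n \in Ts i0 := phiT i0 x Tx.
have Nn : n \in N := subsetP (sTN i0) _ Tn.
exists a, (n a).
pose D := 'C_N[a | 'P].
have sDGa : D \subset 'C_G[a | 'P] := setSI _ sNG.
have nDGa : 'C_G[a | 'P] \subset 'N(D).
  rewrite normsI //.
    exact: subset_trans (subsetIl _ _) (normal_norm nNG).
  exact: subset_trans (subsetIr _ _) (normG _).
have odiv := @orbit_div _ _ 'P _ _ (n a) sDGa nDGa.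
rewrite card_orbit; apply: dvdn_trans odiv.
have conjdel : forall t, t \in T ->
    del t ^ n^-1 = \prod_(i < k) phi i (if i == i0 then t ^ x^-1 else t).
  move=> t Tt; rewrite /del conjg_bigprod; apply: eq_bigr => i _.
  case: eqP => [-> | /eqP ni].
    by rewrite morphJ ?groupV // morphV.
  apply: conj_comm.
  have := subsetP (cTs i i0 ni) _ (phiT i t Tt); move/centP; apply.
  by rewrite groupV.
have eCb : forall d, (d \in 'C[n a | 'P]) = (d ^ n^-1 \in 'C[a | 'P]).
  move=> d; have -> : n a = 'P%act a n by [].
  by rewrite astab1_act mem_conjg.
have key : 'C_D[n a | 'P] = [set del t | t in 'C_T[x]].
  apply/setP => d; apply/idP/idP.
    case/setIP => Dd Cd.
    move: (Dd); rewrite /D defD => /imsetP[t Tt dt].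
    have Dd' : d ^ n^-1 \in D.
      rewrite inE -eCb Cd andbT groupJ ?groupV //.
      by move: Dd; rewrite inE => /andP[].
    move: (Dd'); rewrite /D defD => /imsetP[s Ts' ds].
    rewrite dt conjdel // in ds.
    have eT : forall i, phi i (if i == i0 then t ^ x^-1 else t) \in Ts i.
      by move=> i; case: ifP => _; rewrite phiT ?groupJ ?groupV.
    have cmp := comp _ _ eT (fun i => phiT i s Ts') ds.
    have ets : t = s.
      by have := cmp i1; rewrite (negbTE ne10); apply: phi_inj.
    have e0 : t ^ x^-1 = t.
      have := cmp i0; rewrite eqxx -ets; apply: phi_inj => //.
      by rewrite groupJ ?groupV.
    rewrite dt; apply: imset_f; rewrite inE Tt cent1E /=.
    by rewrite -{1}e0 conjgE invgK !mulgA mulgKV.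
  case/imsetP => t /setIP[Tt Ct] ->.
  have Dt : del t \in D by rewrite /D defD; apply: imset_f.
  rewrite inE Dt eCb conjdel //.
  have e0 : t ^ x^-1 = t.
    by rewrite -{1}(conj_comm (cent1P Ct)) conjgK.
  have -> : \prod_(i < k) phi i (if i == i0 then t ^ x^-1 else t) = del t.
    by apply: eq_bigr => i _; rewrite e0; case: ifP.
  by move: Dt; rewrite inE => /andP[].
suff eI : #|D : 'C_D[n a | 'P]| = #|T : 'C_T[x]| by move: px; rewrite -eI.
have c1 : #|D| = #|T| by rewrite /D defD card_in_imset.
have c2 : #|'C_D[n a | 'P]| = #|'C_T[x]|.
  rewrite key card_in_imset //.
  exact: (sub_in2 (subsetP (subsetIl T 'C[x])) del_inj).
rewrite -!divgS ?subsetIl //; congr (_ %/ _); [exact: c1 | exact: c2].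
Qed.
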